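(* Let $X$ be a CAT(0) cube complex and $v,w$ vertices of $X$. Root $X$ at $v$ and identify $X$ with $X_P$, where $P=P(X,v)$ is the associated poset with inconsistent pairs. Then the vertex $w$ corresponds to a consistent order ideal $Q$ of $P$, and the vertices of the interval $X[v,w]$ correspond exactly to the order ideals of $Q$ (with the order induced from $P$). In particular, $X[v,w]\cong X_Q$, where $Q$ is regarded as a poset with no inconsistent pairs.
   Context: Hyperplanes: in a cube complex, call two edges of a cube equivalent if they are parallel in that cube, and extend transitively to an equivalence relation on all edges of $X$; each equivalence class determines a hyperplane (the union of the midcubes of the cubes orthogonal to those edges). For a rooted CAT(0) cube complex $(X,v)$, the poset with inconsistent pairs $P(X,v)$ has as elements the hyperplanes of $X$; $i<j$ if, starting from $v$, every edge path must cross hyperplane $i$ before crossing hyperplane $j$; and $\{i,j\}$ is inconsistent if no vertex of $X$ is separated from $v$ by both $i$ and $j$. The vertex $x$ of $X$ is identified with the set of hyperplanes separating $x$ from $v$; these sets are exactly the consistent order ideals of $P$, and this identifies $X$ with the cube complex $X_P$ (vertices = consistent order ideals; a cube $C(I,M)$ for each consistent order ideal $I$ and $M\subseteq I_{\max}$, with vertices $I\setminus S$, $S\subseteq M$). A poset with inconsistent pairs is a locally finite poset of finite width with a set of pairs $\{p,q\}$ such that inconsistent pairs have no common upper bound and pairs above inconsistent pairs are inconsistent. The interval $X[v,w]$ is the subcomplex of $X$ consisting of all cubes all of whose vertices lie on at least one edge geodesic (shortest path in the 1-skeleton) between $v$ and $w$. *)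

(* Defs.v *)
From HB Require Import structures.
From mathcomp Require Import all_boot.
From mathcomp Require Import finmap.
Set Implicit Arguments. Unset Strict Implicit. Unset Printing Implicit Defensive.
Local Open Scope fset_scope.

Section PIPCubeComplex.
Variable T : choiceType.

Definition is_PIP (le incons : T -> T -> Prop) : Prop :=
  (forall x, le x x) /\
  (forall x y, le x y -> le y x -> x = y) /\
  (forall x y z, le x y -> le y z -> le x z) /\
      (forall x y, exists s : seq T, forall z, le x z -> le z y -> z \in s) /\
      (exists n : nat, forall s : seq T, uniq s ->
          (forall x y, x \in s -> y \in s -> le x y -> x = y) -> size s <= n) /\
      (forall x y, incons x y -> incons y x) /\
      (forall x y, incons x y -> ~ exists z, le x z /\ le y z) /\
      (forall x y x' y', incons x y -> le x x' -> le y y' -> incons x' y').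

(* The cube complex X_P, for a PIP whose ground set is the carrier [E]
   (E = predT for P itself; E = mem Q for a sub-poset Q). *)
Variables (E : pred T) (le incons : T -> T -> Prop).

Definition order_ideal (I : {fset T}) : Prop :=
  (forall x, x \in I -> E x) /\
  (forall x y, x \in I -> E y -> le y x -> y \in I).

Definition consistent (I : {fset T}) : Prop :=
  forall x y, x \in I -> y \in I -> ~ incons x y.

Definition XP_vertex (I : {fset T}) : Prop := order_ideal I /\ consistent I.

Definition is_max (I : {fset T}) (m : T) : Prop :=
  m \in I /\ forall y, y \in I -> le m y -> y = m.

(* cube C(I,M) of X_P: I a consistent order ideal, M a subset of I_max;
   its vertices are the sets I \ S for S a subset of M *)
Definition XP_cube (I M : {fset T}) : Prop :=
  XP_vertex I /\ forall m, m \in M -> is_max I m.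

Definition cube_vertex (I M J : {fset T}) : Prop :=
  exists2 S : {fset T}, S `<=` M & J = I `\` S.

Definition XP_adj (I J : {fset T}) : Prop :=
  (XP_vertex I /\ exists2 m, is_max I m & J = I `\ m) \/
  (XP_vertex J /\ exists2 m, is_max J m & I = J `\ m).

Definition XP_walk (a b : {fset T}) (s : seq {fset T}) : Prop :=
  [/\ s != [::], head fset0 s = a, last fset0 s = b &
      forall i, i.+1 < size s -> XP_adj (nth fset0 s i) (nth fset0 s i.+1)].

Definition XP_geodesic (a b : {fset T}) (s : seq {fset T}) : Prop :=
  XP_walk a b s /\ forall s', XP_walk a b s' -> size s <= size s'.

Definition interval_vertex (a b x : {fset T}) : Prop :=
  XP_vertex x /\ exists2 s, XP_geodesic a b s & x \in s.

Definition interval_cube (a b I M : {fset T}) : Prop :=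
  XP_cube I M /\ forall J, cube_vertex I M J -> interval_vertex a b J.

End PIPCubeComplex.

Definition induced_le (T : choiceType) (le : T -> T -> Prop) (Q : {fset T}) :=
  fun x y => x \in Q /\ y \in Q /\ le x y.
Definition no_incons (T : Type) := fun (_ _ : T) => False.

(* Main.v *)
Require Import Defs.
From HB Require Import structures.
From mathcomp Require Import all_boot.
From mathcomp Require Import finmap.
From mathcomp Require Import zify.
From Stdlib Require Import Classical.
Local Open Scope fset_scope.
Set Implicit Arguments. Unset Strict Implicit.

Section Aux.
Variables (T : choiceType) (le incons : T -> T -> Prop).
Hypothesis le_anti : forall x y, le x y -> le y x -> x = y.
Hypothesis le_trans : forall x y z, le x y -> le y z -> le x z.

Lemma seq_min (s : seq T) : s != [::] ->
  exists2 m, m \in s & forall y, y \in s -> le y m -> y = m.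
Proof.
elim: s => [//|x s IH] _.
case: (eqVneq s [::]) => [->|ne].
  exists x; first by rewrite inE.
  by move=> y; rewrite inE => /eqP ->.
have [m ms mmin] := IH ne.
case: (classic (le x m)) => H.
  exists x; first by rewrite inE eqxx.
  move=> y; rewrite inE => /orP [/eqP -> //|ys] lyx.
  have eym := mmin y ys (le_trans lyx H).
  subst y; exact: le_anti.
exists m; first by rewrite inE ms orbT.
move=> y; rewrite inE => /orP [/eqP -> lxm| ys]; [contradiction|exact: mmin].
Qed.

Definition ideal (I : {fset T}) := order_ideal predT le I.

Lemma step (J D : {fset T}) : ideal J -> ideal D -> J `<=` D -> J != D ->
  exists m, [/\ m \in D, m \notin J, ideal (m |` J), is_max le (m |` J) m &
     J = (m |` J) `\ m].
Proof.
move=> [_ iJ] [_ iD] JD JnD.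
have ne : ((D `\` J) : seq T) != [::].
  apply/eqP => e.
  move/negP: JnD; apply; rewrite eqEfsubset JD /=.
  apply/fsubsetP => x xD; apply/negPn/negP => xJ.
  have : x \in (D `\` J : seq T) by rewrite in_fsetD xJ xD.
  by rewrite e.
have [m mDJ mmin] := seq_min ne.
have mDJ' : m \in D `\` J by [].
move: mDJ'; rewrite in_fsetD => /andP [mJ mD].
exists m; split => //.
- split => // x y; rewrite in_fsetU in_fset1 => /orP [/eqP ->|xJ] _ lyx.
    case: (boolP (y \in J)) => yJ; first by rewrite in_fsetU yJ orbT.
    have yD : y \in D by apply: iD lyx.
    have : y \in (D `\` J : seq T) by rewrite in_fsetD yJ yD.
    by move=> /mmin /(_ lyx) ->; rewrite in_fsetU in_fset1 eqxx.
  by rewrite in_fsetU (iJ x y xJ isT lyx) orbT.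
- split; first by rewrite in_fsetU in_fset1 eqxx.
  move=> y; rewrite in_fsetU in_fset1 => /orP [/eqP -> //|yJ] lmy.
  by rewrite (iJ y m yJ isT lmy) in mJ.
- apply/fsetP => x; rewrite in_fsetD1 in_fsetU in_fset1.
  case: (eqVneq x m) => [->|//]; by rewrite (negbTE mJ).
Qed.

Lemma build n : forall J I K, #|` K `\` J| = n -> ideal J -> ideal I ->
  XP_vertex predT le incons K -> J `<=` I -> I `<=` K ->
  exists s, [/\ XP_walk predT le incons J K s, size s = n.+1 & I \in s].
Proof.
elim: n => [|n IH] J I K cK iJ iI vK JI IK.
  have KJ : K `<=` J by rewrite -fsetD_eq0 -cardfs_eq0 cK.
  have eJK : J = K by apply/eqP; rewrite eqEfsubset KJ (fsubset_trans JI IK).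
  have eIK : I = K by apply/eqP; rewrite eqEfsubset IK -eJK JI.
  subst J I; exists [:: K]; split => //; last by rewrite inE.
have JK : J `<=` K by exact: (fsubset_trans JI IK).
have [vKi cKc] := vK.
pose D := if J == I then K else I.
have iD : ideal D by rewrite /D; case: ifP.
have JD : J `<=` D by rewrite /D; case: ifP.
have DK : D `<=` K by rewrite /D; case: ifP.
have JnD : J != D.
  rewrite /D; case: ifP => [_|/negbT //].
  apply/eqP => eJK; move: cK; rewrite eJK fsetDv cardfs0 //.
have [m [mD mJ iJ' mx eJ]] := step iJ iD JD JnD.
set J' := m |` J in iJ' mx eJ.
have J'D : J' `<=` D.
  by apply/fsubsetP => x; rewrite in_fsetU in_fset1 => /orP [/eqP ->|/(fsubsetP JD)].
have J'K : J' `<=` K by exact: (fsubset_trans J'D DK).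
have cK' : #|` K `\` J'| = n.
  move: cK; rewrite !cardfsDS // /J' cardfsU1 mJ.
  have := fsubset_leq_card J'K; rewrite /J' cardfsU1 mJ /=; lia.
pose I' := if J == I then J' else I.
have iI' : ideal I' by rewrite /I'; case: ifP.
have J'I' : J' `<=` I'.
  rewrite /I'; case: ifP => // /negbT H; by rewrite /D (negbTE H) in J'D.
have I'K : I' `<=` K by rewrite /I'; case: ifP.
have [s' [[s'n hs' ls' ws'] ss' Is']] := IH J' I' K cK' iJ' iI' vK J'I' I'K.
exists (J :: s'); split => //=; last first.
  rewrite inE; move: Is'; rewrite /I'; case: ifP => [/eqP -> _|_ ->].
    by rewrite eqxx.
  by rewrite orbT.
- by rewrite ss'.
split => //.
  by case: s' s'n ls' {ws' hs' ss' Is'}.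
case => [|i] /= Hi.
  right.
  case: s' s'n {ls' ws' ss' Is'} hs' Hi => //= a s'' _ -> _.
  split; last by exists m.
  split => //.
  by move=> x y xJ yJ; apply: cKc; apply: (fsubsetP J'K).
exact: ws'.
Qed.

Definition dd (a b : {fset T}) := (#|` a `\` b| + #|` b `\` a|)%N.

Lemma card_sub (A B C : {fset T}) : A `<=` B `|` C -> (#|` A| <= #|` B| + #|` C|)%N.
Proof.
move=> H; apply: leq_trans (fsubset_leq_card H) _.
by rewrite cardfsU leq_subr.
Qed.

Lemma tri1 (a b c : {fset T}) : (#|` a `\` b| <= #|` a `\` c| + #|` c `\` b|)%N.
Proof.
apply: card_sub; apply/fsubsetP => x.
rewrite !in_fsetD in_fsetU !in_fsetD => /andP [xb xa].
by case: (boolP (x \in c)) => xc; rewrite ?xb ?xa ?xc ?orbT.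
Qed.

Lemma tri (a b c : {fset T}) : (dd a b <= dd a c + dd c b)%N.
Proof.
rewrite /dd; have := tri1 a b c; have := tri1 b a c; lia.
Qed.

Lemma del1 (a : {fset T}) m : (dd a (a `\ m) <= 1)%N.
Proof.
rewrite /dd.
have -> : (a `\ m) `\` a = fset0.
  by apply/fsetP => x; rewrite in_fsetD in_fsetD1 in_fset0; case: (x \in a); rewrite ?andbF.
rewrite cardfs0 addn0.
apply: leq_trans (fsubset_leq_card (B := [fset m]) _) _; last by rewrite cardfs1.
apply/fsubsetP => x; rewrite in_fsetD in_fsetD1 in_fset1.
by case: (x \in a); rewrite ?andbF ?andbT // negbK.
Qed.

Lemma ddC a b : dd a b = dd b a.
Proof. by rewrite /dd addnC. Qed.

Lemma adj_dd a c : XP_adj predT le incons a c -> (dd a c <= 1)%N.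
Proof.
case => [[_ [m _ ->]]|[_ [m _ ->]]]; first exact: del1.
rewrite ddC; exact: del1.
Qed.

Lemma walk_dd (s : seq {fset T}) :
  (forall i, i.+1 < size s -> XP_adj predT le incons (nth fset0 s i) (nth fset0 s i.+1)) ->
  forall j i, i <= j -> j < size s -> (dd (nth fset0 s i) (nth fset0 s j) <= j - i)%N.
Proof.
move=> H; elim => [|j IH] i ij js.
  have -> : i = 0 by lia.
  by rewrite /dd fsetDv cardfs0.
case: (eqVneq i j.+1) => [->|ne].
  by rewrite /dd fsetDv cardfs0.
have ij' : i <= j by lia.
have := IH i ij' (ltnW js).
have := adj_dd (H j js).
have := tri (nth fset0 s i) (nth fset0 s j.+1) (nth fset0 s j).
lia.
Qed.

Lemma walk_len a b s : XP_walk predT le incons a b s -> (dd a b < size s)%N.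
Proof.
case=> sn hs ls ws.
have sz : 0 < size s by case: s sn {hs ls ws}.
have := walk_dd ws (j := (size s).-1) (i := 0) (leq0n _) ltac:(lia).
rewrite nth0 hs nth_last ls; lia.
Qed.

End Aux.

Theorem lemma3p2 (T : choiceType) (le incons : T -> T -> Prop)
    (Q : {fset T}) :
  is_PIP le incons ->
  XP_vertex predT le incons Q ->
  (* vertices of X[v,w] = order ideals of Q (with the induced order) *)
  (forall I : {fset T},
      interval_vertex predT le incons fset0 Q I <->
      order_ideal (mem Q) (induced_le le Q) I)
  /\
  (* X[v,w] = X_Q as cube complexes (Q with no inconsistent pairs) *)
  (forall I M : {fset T},
      interval_cube predT le incons fset0 Q I M <->
      XP_cube (mem Q) (induced_le le Q) (@no_incons T) I M).
Proof.
move=> [refl [anti [trans _]]] vQ.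
have [[_ iQ] cQ] := vQ.
have i0 : ideal le fset0 by split.
have Part1 : forall I, interval_vertex predT le incons fset0 Q I <->
      order_ideal (mem Q) (induced_le le Q) I.
  move=> I; split.
    move=> [[[_ iI] cI] [s [ws gs] Is]].
    have [s0 [w0 sz0 _]] := build anti trans (n := #|` Q `\` fset0|)
       (I := fset0) erefl i0 i0 vQ (fsub0set _) (fsub0set _).
    have sz := gs _ w0; rewrite sz0 fsetD0 in sz.
    have IQ : I `<=` Q.
      case: ws => _ hs ls ws'.
      set i := index I s.
      have ilt : i < size s by rewrite index_mem.
      have nI : nth fset0 s i = I by rewrite nth_index.
      have d1 := walk_dd ws' (j := i) (i := 0) (leq0n _) ilt.
      have d2 := walk_dd ws' (j := (size s).-1) (i := i) ltac:(lia) ltac:(lia).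
      rewrite nth0 hs nI in d1; rewrite nI nth_last ls in d2.
      move: d1 d2; rewrite /dd fset0D fsetD0 cardfs0 add0n => d1 d2.
      have d3 : (#|` Q| <= #|` Q `\` I| + #|` I|)%N.
        apply: card_sub; apply/fsubsetP => x xQ.
        by rewrite in_fsetU in_fsetD xQ andbT orNb.
      rewrite -fsetD_eq0 -cardfs_eq0; apply/eqP; lia.
    split; first by move=> x /(fsubsetP IQ).
    by move=> x y xI _ [_ [_ lyx]]; apply: iI lyx.
  move=> [IQ' iI].
  have IQ : I `<=` Q by apply/fsubsetP => x /IQ'.
  have iIP : ideal le I.
    split => // x y xI _ lyx.
    have xQ : x \in Q by apply: (fsubsetP IQ).
    have yQ : y \in Q by apply: iQ lyx.
    by apply: (iI x y xI) => //; split => //.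
  split.
    split => //; move=> x y xI yI; apply: cQ; exact: (fsubsetP IQ).
  have [s [ws sz Is]] := build anti trans (n := #|` Q `\` fset0|)
       (I := I) erefl i0 iIP vQ (fsub0set _) IQ.
  exists s => //; split => // s' w'.
  have := walk_len w'; rewrite sz /dd fsetD0 fset0D cardfs0; lia.
split => //.
move=> I M; split.
  move=> [[vI mM] H].
  have /Part1 iI : interval_vertex predT le incons fset0 Q I.
    apply: H; exists fset0; [exact: fsub0set | by rewrite fsetD0].
  split; first by split => // x y _ _ [].
  move=> m /mM [mI mx]; split => // y yI [_ [_ lmy]]; exact: mx.
move=> [[iI _] mM].
have [IQ' _] := iI.
have IQ : I `<=` Q by apply/fsubsetP => x /IQ'.
have mM' : forall m, m \in M -> is_max le I m.
  move=> m /mM [mI mx]; split => // y yI lmy; apply: mx => //.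
  by split; [apply: (fsubsetP IQ)|split; [apply: (fsubsetP IQ)|]].
have vI : interval_vertex predT le incons fset0 Q I by apply/Part1.
split; first by split; [exact: vI.1|].
move=> J [S SM ->]; apply/Part1.
split; first by move=> x; rewrite in_fsetD => /andP [_ /IQ'].
move=> x y; rewrite !in_fsetD => /andP [xS xI] yQ lyx.
have yI : y \in I by apply: iI.2 xI yQ lyx.
rewrite yI andbT; apply/negP => yS.
have [_ mx] := mM' y (fsubsetP SM y yS).
have [_ [_ lyx']] := lyx.
by move: xS; rewrite (mx x xI lyx') yS.
Qed.
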